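(* Let $p\ge1$, let $y_1,y_2\in\mathbb{R}^p$ with $d=\|y_1-y_2\|_2$ and $\bar y=\frac12(y_1+y_2)$. Let $\delta>0$ and $\lambda>0$, and let $\rho$ be the minimax concave penalty $$\rho(t)=\Bigl(t-\frac{t^2}{2\lambda\delta}\Bigr)I(t<\lambda\delta)+\frac{\lambda\delta}{2}I(t\ge\lambda\delta),\qquad t\ge 0.$$ If $\lambda\ge(1+\frac1\delta)\,d$, then the global minimizer over $(\theta_1,\theta_2)\in\mathbb{R}^p\times\mathbb{R}^p$ of $$\ell(\theta_1,\theta_2)=\|y_1-\theta_1\|_2^2+\|y_2-\theta_2\|_2^2+\lambda\rho(\|\theta_1-\theta_2\|_2)$$ is $(\hat\theta_1,\hat\theta_2)=(\bar y,\bar y)$.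
   Context: $I(\cdot)$ denotes the indicator function. *)

(* Defs.v *)
From HB Require Import structures.
From mathcomp Require Import all_boot all_order all_algebra.
Set Implicit Arguments. Unset Strict Implicit. Unset Printing Implicit Defensive.
Import Order.TTheory GRing.Theory Num.Theory.
Local Open Scope ring_scope.

Definition norm2 (R : rcfType) (p : nat) (v : 'rV[R]_p) : R :=
  Num.sqrt (\sum_(i < p) v 0 i ^+ 2).

Definition mcp (R : rcfType) (delta lambda t : R) : R :=
  (if t < lambda * delta then t - t ^+ 2 / (2 * lambda * delta) else 0)
  + (if lambda * delta <= t then lambda * delta / 2 else 0).

Definition loss (R : rcfType) (p : nat) (delta lambda : R)
  (y1 y2 th1 th2 : 'rV[R]_p) : R :=
  norm2 (y1 - th1) ^+ 2 + norm2 (y2 - th2) ^+ 2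
  + lambda * mcp delta lambda (norm2 (th1 - th2)).

(* Main.v *)
Require Import Defs.
From HB Require Import structures.
From mathcomp Require Import all_boot all_order all_algebra.
From mathcomp Require Import ring lra.
Import Order.TTheory GRing.Theory Num.Theory.
Local Open Scope ring_scope.
Set Implicit Arguments. Unset Strict Implicit.

Section H.
Variables (R : rcfType) (p : nat).
Implicit Types (e u v : 'rV[R]_p).
Definition sq v := \sum_(i < p) v 0 i ^+ 2.
Definition dot u v := \sum_(i < p) u 0 i * v 0 i.

Lemma sq_ge0 v : 0 <= sq v.
Proof. by apply: sumr_ge0 => i _; rewrite sqr_ge0. Qed.

Lemma norm2_sq v : norm2 v ^+ 2 = sq v.
Proof. by rewrite /norm2 sqr_sqrtr // sq_ge0. Qed.

Lemma norm2_ge0 v : 0 <= norm2 v.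
Proof. exact: sqrtr_ge0. Qed.

Lemma sq_eq0 v : sq v = 0 -> v = 0.
Proof.
move=> /eqP; rewrite psumr_eq0; last by move=> i _; rewrite sqr_ge0.
move=> /allP H; apply/rowP => i; rewrite mxE.
have := H i (mem_index_enum _); rewrite /= sqrf_eq0 => /eqP ->. by [].
Qed.

Lemma sq_lin (a b : R) e u :
  sq (a *: e + b *: u) = a ^+ 2 * sq e + 2 * a * b * dot e u + b ^+ 2 * sq u.
Proof.
rewrite /sq /dot !mulr_sumr -!big_split; apply: eq_bigr => i _; rewrite /= !mxE; ring.
Qed.

Lemma sq_sub e u : sq (e - u) = sq e - 2 * dot e u + sq u.
Proof.
have -> : e - u = 1 *: e + (-1) *: u by rewrite !scaleN1r scale1r.
rewrite sq_lin; ring.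
Qed.

Lemma cs e u : dot e u <= norm2 e * norm2 u.
Proof.
have H := sq_ge0 (norm2 u *: e + (- norm2 e) *: u).
rewrite sq_lin -!norm2_sq in H.
have de := norm2_ge0 e; have du := norm2_ge0 u.
have [hp|h0] := ltP 0 (norm2 e * norm2 u).
  nra.
have {h0}: norm2 e * norm2 u = 0.
  by apply/eqP; rewrite eq_le h0 mulr_ge0.
move/eqP; rewrite mulf_eq0 => /orP [] /eqP h.
  have : sq e = 0 by rewrite -norm2_sq h expr0n.
  move/sq_eq0 => E; rewrite E /dot big1; last by move=> i _; rewrite mxE mul0r.
  by rewrite -E h mul0r.
have : sq u = 0 by rewrite -norm2_sq h expr0n.
move/sq_eq0 => E; rewrite E /dot big1; last by move=> i _; rewrite mxE mulr0.
by rewrite -E h mulr0.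
Qed.

Lemma two_neq0 : (2 : R) != 0.
Proof. by rewrite pnatr_eq0. Qed.

Lemma half_double v : 2^-1 *: (v + v) = v.
Proof. apply/rowP => i; rewrite !mxE; by field. Qed.

Lemma decomp (y1 y2 s1 s2 : 'rV[R]_p) :
  sq (y1 - s1) + sq (y2 - s2) =
  2 * sq (2^-1 *: (y1 + y2) - 2^-1 *: (s1 + s2)) + sq ((y1 - y2) - (s1 - s2)) / 2.
Proof.
rewrite /sq mulr_sumr mulr_suml -!big_split; apply: eq_bigr => i _.
rewrite /= !mxE; by field.
Qed.

Lemma norm20 : norm2 (0 : 'rV[R]_p) = 0.
Proof.
rewrite /norm2 big1 ?sqrtr0 // => i _; rewrite mxE expr0n.
by [].
Qed.

Lemma mcp0 (delta lambda : R) : 0 < lambda * delta -> mcp delta lambda 0 = 0.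
Proof.
move=> h; rewrite /mcp h; have -> : (lambda * delta <= 0) = false.
  by apply/negbTE; rewrite -ltNge.
rewrite expr0n /= mul0r; ring.
Qed.

Lemma gpos (delta lambda d t : R) : 0 < delta -> 0 < lambda -> 0 <= d ->
  (1 + delta^-1) * d <= lambda -> 0 < t ->
  0 < t ^+ 2 / 2 - d * t + lambda * mcp delta lambda t.
Proof.
move=> hd hl hd0 hlam ht.
have hl' : (delta + 1) * d <= lambda * delta.
  have := ler_wpM2r (ltW hd) hlam.
  have -> : (1 + delta^-1) * d * delta = (delta + 1) * d.
    field; by rewrite gt_eqF.
  by [].
have hld : 0 < lambda * delta by rewrite mulr_gt0.
rewrite /mcp; case: (ltP t (lambda * delta)) => h1.
- rewrite addr0.
  have -> : t ^+ 2 / 2 - d * t + lambda * (t - t ^+ 2 / (2 * lambda * delta))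
     = t * (2 * delta * (lambda - d) + t * (delta - 1)) / (2 * delta).
    by field; rewrite ?gt_eqF.
  apply: divr_gt0; last lra.
  apply: mulr_gt0 => //.
  have [dd|dd] := leP 1 delta.
    have [d0|d0] := eqVneq d 0.
      rewrite d0; nra.
    have : 0 < d by rewrite lt0r d0.
    nra.
  nra.
- rewrite add0r.
  have [d0|d0] := eqVneq d 0.
    rewrite d0; nra.
  have dp : 0 < d by rewrite lt0r d0.
  have ld : lambda * (delta + 1) * d <= lambda * (lambda * delta) by nra.
  nra.
Qed.
End H.

Theorem lemma2 (R : rcfType) (p : nat) (hp : (1 <= p)%N)
  (y1 y2 : 'rV[R]_p) (delta lambda : R)
  (hdelta : 0 < delta) (hlambda : 0 < lambda)
  (hlam : (1 + delta^-1) * norm2 (y1 - y2) <= lambda) :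
  forall t1 t2 : 'rV[R]_p,
    (forall s1 s2 : 'rV[R]_p,
        loss delta lambda y1 y2 t1 t2 <= loss delta lambda y1 y2 s1 s2)
    <-> (t1 = 2^-1 *: (y1 + y2) /\ t2 = 2^-1 *: (y1 + y2)).
Proof.
set yb := 2^-1 *: (y1 + y2).
set e := y1 - y2.
have hld : 0 < lambda * delta by rewrite mulr_gt0.
pose g (t : R) := t ^+ 2 / 2 - norm2 e * t + lambda * mcp delta lambda t.
have g_ge0 : forall t : R, 0 <= t -> 0 <= g t.
  move=> t; rewrite le0r => /orP [/eqP -> | tp].
    by rewrite /g mcp0 // expr0n /= mul0r mulr0 mulr0 subrr addr0.
  by apply: ltW; apply: gpos => //; apply: norm2_ge0.
have key : forall s1 s2 : 'rV[R]_p,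
    sq e / 2 + 2 * sq (yb - 2^-1 *: (s1 + s2)) + g (norm2 (s1 - s2))
      <= loss delta lambda y1 y2 s1 s2.
  move=> s1 s2; rewrite /loss !norm2_sq decomp sq_sub /g.
  have := cs e (s1 - s2); have := norm2_sq (s1 - s2).
  rewrite -/yb -/e; lra.
have lyb : loss delta lambda y1 y2 yb yb = sq e / 2.
  rewrite /loss !norm2_sq decomp half_double !subrr subr0 norm20 mcp0 //.
  rewrite /sq big1 ?mulr0 ?add0r ?addr0 // => i _; rewrite mxE expr0n.
  by [].
move=> t1 t2; split.
- move=> H; have := H yb yb; rewrite lyb => H1.
  have := key t1 t2.
  have hs := sq_ge0 (yb - 2^-1 *: (t1 + t2)).
  have hg := g_ge0 _ (norm2_ge0 (t1 - t2)).
  move=> K.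
  have sq0 : sq (yb - 2^-1 *: (t1 + t2)) = 0 by lra.
  have g0 : g (norm2 (t1 - t2)) = 0 by lra.
  have n0 : norm2 (t1 - t2) = 0.
    have [//|nz] := eqVneq (norm2 (t1 - t2)) 0.
    have : 0 < norm2 (t1 - t2) by rewrite lt0r nz norm2_ge0.
    move=> /(gpos hdelta hlambda (norm2_ge0 e) hlam).
    by rewrite -/(g _) g0 ltxx.
  have : sq (t1 - t2) = 0 by rewrite -norm2_sq n0 expr0n.
  move/sq_eq0/eqP; rewrite subr_eq0 => /eqP E; subst t2.
  move/sq_eq0/eqP: sq0; rewrite subr_eq0 half_double => /eqP <-.
  by [].
- move=> [-> ->] s1 s2.
  by rewrite lyb; apply: le_trans (key s1 s2); have := g_ge0 _ (norm2_ge0 (s1 - s2)); have := sq_ge0 (yb - 2^-1 *: (s1 + s2)); lra.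
Qed.
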